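(* Let $C\subseteq[n]$ be a nonempty proper subset and let $\ket{\psi}=\ket{a}_C\otimes\ket{b}_{\overline{C}}$ be an $n$-qubit state, where $\ket{a}_C$ and $\ket{b}_{\overline{C}}$ are each $\epsilon$-far from every multipartite product state. Suppose we are given two copies of $\ket{\psi}$ and run the SWAP test on a nonempty proper subset $S\subseteq[n]$ of the qubits. If $S=C$ or $S=\overline{C}$, the SWAP test always accepts. If $S\ne C,\overline{C}$, the SWAP test accepts with probability at most $1-\epsilon^2/2$.
   Context: A state on a set $Q$ of qubits is multipartite product if it equals $\ket{a'}_D\otimes\ket{b'}_{Q\setminus D}$ for some nonempty proper $D\subsetneq Q$; a pure state $\ket{\phi}$ is $\epsilon$-far from a set $\mathcal{P}$ if $|\langle\phi|\chi\rangle|^2\le1-\epsilon^2$ for all $\ket{\chi}\in\mathcal{P}$. The SWAP test on the qubits $S$ of two copies $\ket{\psi}\otimes\ket{\psi}$: append an ancilla qubit in $\ket{+}$, apply, controlled on the ancilla, the unitary that swaps the qubits in $S$ of the first copy with the corresponding qubits of the second copy, apply a Hadamard to the ancilla, measure it in the standard basis and accept on outcome $0$. Equivalently it measures the projector $\frac12(I+\mathrm{SWAP}_S)$, with acceptance probability $\frac12+\frac12\mathrm{Tr}(\psi_S^2)$. *)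

(* Defs.v *)
From HB Require Import structures.
From mathcomp Require Import all_boot all_order all_algebra.
Set Implicit Arguments. Unset Strict Implicit. Unset Printing Implicit Defensive.
Import Order.TTheory GRing.Theory Num.Theory.
Local Open Scope ring_scope.

(* Qubits of an n-qubit system are indexed by 'I_n.  A subset Q of qubits is a
   {set 'I_n}; the computational basis of the qubits in Q is indexed by
   [conf Q] = bit assignments to the elements of Q.  A (pure, unnormalised)
   vector on Q with amplitudes in K is a {ffun conf Q -> K}. *)
Notation conf Q := {ffun {i | i \in Q} -> bool}.

Definition full n (Q : {set 'I_n}) (x : conf Q) : 'I_n -> bool :=
  fun i => odflt false (omap x (insub i : option {j | j \in Q})).

Definition restr n (D : {set 'I_n}) (f : 'I_n -> bool) : conf D :=
  [ffun j => f (val j)].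

(* tensor product |a>_D (x) |b>_E, viewed as a vector on Q (used with E = Q \ D) *)
Definition tens (K : numClosedFieldType) n (Q D E : {set 'I_n})
  (a : {ffun conf D -> K}) (b : {ffun conf E -> K}) : {ffun conf Q -> K} :=
  [ffun x => a (restr D (full x)) * b (restr E (full x))].

Definition dotq (K : numClosedFieldType) n (Q : {set 'I_n})
  (u v : {ffun conf Q -> K}) : K := \sum_x (u x)^* * v x.

Definition is_state (K : numClosedFieldType) n (Q : {set 'I_n})
  (u : {ffun conf Q -> K}) : Prop := dotq u u = 1.

Definition mproduct (K : numClosedFieldType) n (Q : {set 'I_n})
  (chi : {ffun conf Q -> K}) : Prop :=
  exists D : {set 'I_n}, [/\ D != set0, D \proper Q &
    exists (a : {ffun conf D -> K}) (b : {ffun conf (Q :\: D) -> K}),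
      [/\ is_state a, is_state b & chi = tens Q a b]].

Definition eps_far (K : numClosedFieldType) n (Q : {set 'I_n})
  (phi : {ffun conf Q -> K}) (eps : K) : Prop :=
  forall chi, is_state chi -> mproduct chi -> `|dotq phi chi| ^+ 2 <= 1 - eps ^+ 2.

(* SWAP of the qubits in S between two copies: basis |x,y> |-> |sw x y, sw y x> *)
Definition sw n (Q S : {set 'I_n}) (x y : conf Q) : conf Q :=
  [ffun j => if val j \in S then y j else x j].

(* acceptance probability of the SWAP test on S applied to |psi> (x) |psi>:
   <Psi| (I + SWAP_S)/2 |Psi> with Psi = psi (x) psi *)
Definition swap_accept (K : numClosedFieldType) n (S : {set 'I_n})
  (psi : {ffun conf [set: 'I_n] -> K}) : K :=
  2^-1 * \sum_x \sum_y (psi x * psi y)^* *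
         (psi x * psi y + psi (sw S x y) * psi (sw S y x)).

(* Main.v *)
Require Import Defs.
From HB Require Import structures.
From mathcomp Require Import all_boot all_order all_algebra.
From mathcomp Require Import ring.
Set Implicit Arguments. Unset Strict Implicit. Unset Printing Implicit Defensive.
Import Order.TTheory GRing.Theory Num.Theory.
Local Open Scope ring_scope.

Section Basics.
Variable n : nat.
Implicit Types Q D E S : {set 'I_n}.

Lemma full_in Q (x : conf Q) i (h : i \in Q) : full x i = x (exist _ i h).
Proof. by rewrite /full (insubT (fun j => j \in Q) h). Qed.

Lemma full_out Q (x : conf Q) i : i \notin Q -> full x i = false.
Proof. by move/negbTE=> h; rewrite /full insubF. Qed.

Lemma full_restr Q (f : 'I_n -> bool) i : full (restr Q f) i = (i \in Q) && f i.
Proof.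
case: (boolP (i \in Q)) => h; first by rewrite (full_in _ h) /restr ffunE.
by rewrite full_out.
Qed.

Lemma restr_full Q (x : conf Q) : restr Q (full x) = x.
Proof. by apply/ffunP=> -[i h]; rewrite ffunE /= (full_in x h). Qed.

Lemma restr_ext D (f g : 'I_n -> bool) :
  (forall i, i \in D -> f i = g i) -> restr D f = restr D g.
Proof. by move=> h; apply/ffunP=> -[i hi]; rewrite !ffunE /=; apply: h. Qed.

Lemma full_eq Q (x y : conf Q) :
  (forall i, i \in Q -> full x i = full y i) -> x = y.
Proof. by move=> h; rewrite -(restr_full x) -(restr_full y); apply: restr_ext. Qed.

Lemma full_sw Q S (x y : conf Q) i :
  full (sw S x y) i = if i \in S then full y i else full x i.
Proof.
case: (boolP (i \in Q)) => h.
  by rewrite !(full_in _ h) /sw ffunE.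
by rewrite !full_out //; case: ifP.
Qed.

Lemma restr_sw D Q S (x y : conf Q) :
  restr D (full (sw S x y)) = sw S (restr D (full x)) (restr D (full y)).
Proof. by apply/ffunP=> j; rewrite /sw !ffunE full_sw. Qed.

Definition glue Q D E (s : conf D) (t : conf E) : conf Q :=
  restr Q (fun i => if i \in D then full s i else full t i).

Variables (Q D E : {set 'I_n}).
Hypothesis hQ : forall i, (i \in Q) = (i \in D) || (i \in E).
Hypothesis hDE : forall i, i \in D -> i \notin E.

Lemma r1_glue (s : conf D) (t : conf E) : restr D (full (glue Q s t)) = s.
Proof.
rewrite -[RHS]restr_full; apply: restr_ext => i hi.
by rewrite full_restr hQ hi.
Qed.

Lemma r2_glue (s : conf D) (t : conf E) : restr E (full (glue Q s t)) = t.
Proof.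
rewrite -[RHS]restr_full; apply: restr_ext => i hi.
rewrite full_restr hQ hi orbT /=.
case: ifP => // hD; by move: (hDE hD); rewrite hi.
Qed.

Lemma glue_r (x : conf Q) : glue Q (restr D (full x)) (restr E (full x)) = x.
Proof.
apply: full_eq => i hi; rewrite full_restr hi /=.
case: ifP => hD; rewrite full_restr ?hD //.
by move: hi; rewrite hQ hD /= => ->.
Qed.

Lemma sum_split (K : numClosedFieldType) (F : conf D -> conf E -> K) :
  \sum_(x : conf Q) F (restr D (full x)) (restr E (full x)) =
  \sum_(s : conf D) \sum_(t : conf E) F s t.
Proof.
rewrite pair_big /=.
rewrite (reindex (fun p : conf D * conf E => glue Q p.1 p.2)) /=.
  by apply: eq_bigr => -[s t] _ /=; rewrite r1_glue r2_glue.
exists (fun x => (restr D (full x), restr E (full x))) => [[s t] _ | x _] /=.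
  by rewrite r1_glue r2_glue.
exact: glue_r.
Qed.

Lemma sum_split2 (K : numClosedFieldType)
  (F : conf D -> conf E -> conf D -> conf E -> K) :
  \sum_(x : conf Q) \sum_(y : conf Q)
     F (restr D (full x)) (restr E (full x)) (restr D (full y)) (restr E (full y)) =
  \sum_(s : conf D) \sum_(t : conf E) \sum_(s' : conf D) \sum_(t' : conf E) F s t s' t'.
Proof.
under eq_bigr => x _ do rewrite (sum_split (F (restr D (full x)) (restr E (full x)))).
by rewrite (sum_split (fun s t => \sum_s' \sum_t' F s t s' t')).
Qed.

Lemma dot_tens (K : numClosedFieldType) (u u' : {ffun conf D -> K})
   (v v' : {ffun conf E -> K}) :
  dotq (tens Q u v) (tens Q u' v') = dotq u u' * dotq v v'.
Proof.
rewrite /dotq /tens.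
under eq_bigr do rewrite !ffunE.
rewrite (sum_split (fun s t => (u s * v t)^* * (u' s * v' t))).
rewrite big_distrl; apply: eq_bigr => s _ /=.
rewrite big_distrr; apply: eq_bigr => t _ /=.
rewrite rmorphM /=; ring.
Qed.

End Basics.

Definition Tq (K : numClosedFieldType) n (Q S : {set 'I_n}) (a : {ffun conf Q -> K}) : K :=
  \sum_x \sum_y (a x * a y)^* * (a (sw S x y) * a (sw S y x)).

Section Tqs.
Variables (K : numClosedFieldType) (n : nat).

Lemma sq_dot (Q : {set 'I_n}) (u : {ffun conf Q -> K}) :
  \sum_x \sum_y (u x * u y)^* * (u x * u y) = dotq u u ^+ 2.
Proof.
rewrite expr2 /dotq big_distrl; apply: eq_bigr => x _ /=.
rewrite big_distrr; apply: eq_bigr => y _ /=; rewrite rmorphM /=; ring.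
Qed.

Lemma swap_accept_Tq (S : {set 'I_n}) (psi : {ffun conf [set: 'I_n] -> K}) :
  swap_accept S psi = 2^-1 * (dotq psi psi ^+ 2 + Tq S psi).
Proof.
rewrite /swap_accept /Tq -sq_dot -big_split /=; congr (_ * _).
apply: eq_bigr => x _; rewrite -big_split /=; apply: eq_bigr => y _.
by rewrite mulrDr.
Qed.

Lemma Tq_triv0 (Q S : {set 'I_n}) (a : {ffun conf Q -> K}) :
  (forall i, i \in Q -> i \notin S) -> is_state a -> Tq S a = 1.
Proof.
move=> h st.
have E (x y : conf Q) : sw S x y = x.
  by apply: full_eq => i hi; rewrite full_sw (negbTE (h i hi)).
rewrite /Tq; under eq_bigr do under eq_bigr do rewrite !E.
by rewrite sq_dot st expr1n.
Qed.

Lemma Tq_triv1 (Q S : {set 'I_n}) (a : {ffun conf Q -> K}) :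
  (forall i, i \in Q -> i \in S) -> is_state a -> Tq S a = 1.
Proof.
move=> h st.
have E (x y : conf Q) : sw S x y = y.
  by apply: full_eq => i hi; rewrite full_sw h.
rewrite /Tq; under eq_bigr => x _ do under eq_bigr => y _ do rewrite !E (mulrC (a y)).
by rewrite sq_dot st expr1n.
Qed.

Lemma Tq_tens (Q D E S : {set 'I_n})
  (hQ : forall i, (i \in Q) = (i \in D) || (i \in E))
  (hDE : forall i, i \in D -> i \notin E)
  (a : {ffun conf D -> K}) (b : {ffun conf E -> K}) :
  Tq S (tens Q a b) = Tq S a * Tq S b.
Proof.
rewrite /Tq /tens.
under eq_bigr do under eq_bigr do rewrite !ffunE !restr_sw.
rewrite (sum_split2 hQ hDE (fun s t s' t' =>
   (a s * b t * (a s' * b t'))^* * (a (sw S s s') * b (sw S t t') * (a (sw S s' s) * b (sw S t' t))))).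
rewrite big_distrl; apply: eq_bigr => s _ /=.
rewrite exchange_big /= big_distrl; apply: eq_bigr => s' _ /=.
rewrite big_distrr; apply: eq_bigr => t _ /=.
rewrite big_distrr; apply: eq_bigr => t' _ /=.
rewrite !rmorphM /=; ring.
Qed.
End Tqs.

Section Main.
Variables (K : numClosedFieldType) (n : nat) (Q S : {set 'I_n}) (a : {ffun conf Q -> K}).
Local Notation D1 := (Q :&: S).
Local Notation D2 := (Q :\: (Q :&: S)).

Lemma hQ12 i : (i \in Q) = (i \in D1) || (i \in D2).
Proof. by rewrite !inE; case: (i \in Q); case: (i \in S). Qed.
Lemma h12 i : i \in D1 -> i \notin D2.
Proof. by rewrite !inE => /andP[-> ->]. Qed.

Definition M (s : conf D1) (t : conf D2) : K := a (glue Q s t).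
Lemma aM x : a x = M (restr D1 (full x)) (restr D2 (full x)).
Proof. by rewrite /M (glue_r hQ12). Qed.

Lemma r1_sw (x y : conf Q) : restr D1 (full (sw S x y)) = restr D1 (full y).
Proof. by apply: restr_ext => i; rewrite !inE full_sw => /andP[_ ->]. Qed.
Lemma r2_sw (x y : conf Q) : restr D2 (full (sw S x y)) = restr D2 (full x).
Proof.
apply: restr_ext => i; rewrite !inE full_sw.
by case: (i \in S); case: (i \in Q).
Qed.

Definition G t t' := \sum_s (M s t)^* * M s t'.

Lemma G_conj t t' : (G t t')^* = G t' t.
Proof.
rewrite /G rmorph_sum; apply: eq_bigr => s _ /=.
by rewrite rmorphM /= conjCK mulrC.
Qed.

Lemma GG_ge0 t t' : 0 <= G t t' * G t' t.
Proof. by rewrite -(G_conj t t') -normCK exprn_ge0. Qed.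

Lemma G_ge0 t : 0 <= G t t.
Proof.
by rewrite /G sumr_ge0 // => s _; rewrite mulrC -normCK exprn_ge0.
Qed.

Lemma Tq_G : Tq S a = \sum_t \sum_t' G t t' * G t' t.
Proof.
rewrite /Tq.
under eq_bigr => x _ do under eq_bigr => y _ do rewrite !aM !r1_sw !r2_sw.
rewrite (sum_split2 hQ12 h12 (fun s t s' t' =>
   (M s t * M s' t')^* * (M s' t * M s t'))).
under eq_bigr => s _ do under eq_bigr => t _ do rewrite exchange_big /=.
rewrite exchange_big /=; apply: eq_bigr => t _.
rewrite exchange_big /=; apply: eq_bigr => t' _.
rewrite /G big_distrl; apply: eq_bigr => s _ /=.
rewrite big_distrr; apply: eq_bigr => s' _ /=.
rewrite rmorphM /=; ring.
Qed.

Lemma Tq_ge0 : 0 <= Tq S a.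
Proof. by rewrite Tq_G; apply: sumr_ge0 => t _; apply: sumr_ge0 => t' _; apply: GG_ge0. Qed.

Lemma sumG : dotq a a = \sum_t G t t.
Proof.
rewrite /dotq; under eq_bigr do rewrite !aM.
rewrite (sum_split hQ12 h12 (fun s t => (M s t)^* * M s t)).
by rewrite exchange_big.
Qed.


Lemma Tq_far (eps : K) : D1 != set0 -> D1 \proper Q -> is_state a -> eps_far a eps ->
  Tq S a <= 1 - eps ^+ 2.
Proof.
move=> hne hpr st far.
set T := Tq S a.
pose W t := \sum_t' G t' t * G t t'.
have sumg : \sum_t G t t = 1 by rewrite -sumG.
have sumW : \sum_t W t = T.
  by rewrite /T Tq_G; apply: eq_bigr => t _; apply: eq_bigr => t' _; rewrite mulrC.
have W_ge0 t : 0 <= W t by apply: sumr_ge0 => t' _; apply: GG_ge0.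
have T_ge0 : 0 <= T := Tq_ge0.
have zero t : G t t = 0 -> W t = 0.
  move=> h0.
  have hM s : M s t = 0.
    have nn : forall s', true -> 0 <= (M s' t)^* * M s' t.
      by move=> s' _; rewrite mulrC -normCK exprn_ge0.
    move: h0; rewrite /G => h0.
    have /eqP := psumr_eq0P nn h0 (i:=s) isT.
    by rewrite mulf_eq0 conjC_eq0 orbb => /eqP.
  rewrite /W big1 // => t' _; rewrite /G [X in X * _]big1 ?mul0r // => s _.
  by rewrite hM mulr0.
have [t1 ht1] : exists t1, G t1 t1 != 0.
  case: (pickP (fun t => G t t != 0)) => [t1 h | h]; first by exists t1.
  move: sumg; rewrite big1 => [|t _]; first by move/eqP; rewrite eq_sym oner_eq0.
  by move: (h t) => /negbFE /eqP.
have [t0 /andP[g0 H0]] : exists t0, (G t0 t0 != 0) && (T * G t0 t0 <= W t0).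
  case: (pickP (fun t => (G t t != 0) && (T * G t t <= W t))) => [t0 h | h].
    by exists t0.
  exfalso.
  have rl t : T * G t t \is Num.real by apply: ger0_real; rewrite mulr_ge0 ?G_ge0.
  have lt1 : W t1 - T * G t1 t1 < 0.
    move: (h t1); rewrite ht1 /= => /negbT hn.
    by rewrite subr_lt0 real_ltNge ?hn ?rl ?ger0_real.
  have le t : W t - T * G t t <= 0.
    case: (boolP (G t t == 0)) => [/eqP z | nz]; first by rewrite z zero // mulr0 subrr.
    move: (h t); rewrite nz /= => /negbT hn.
    by rewrite subr_le0 ltW // real_ltNge ?hn ?rl ?ger0_real.
  have : \sum_t (W t - T * G t t) < 0.
    rewrite (bigD1 t1) //=.
    have hs : \sum_(t | t != t1) (W t - T * G t t) <= 0.
      by apply: sumr_le0 => t _; exact: le.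
    by have := ltr_leD lt1 hs; rewrite addr0.
  by rewrite sumrB sumW -mulr_sumr sumg mulr1 subrr ltxx.
set g := G t0 t0.
have gpos : 0 < g by rewrite lt0r g0 G_ge0.
set r := sqrtC g.
have rpos : 0 < r by rewrite sqrtC_gt0.
have rn0 : r != 0 by rewrite gt_eqF.
have rr : r ^+ 2 = g by rewrite sqrtCK.
have rc : r^* = r by rewrite geC0_conj // ltW.
pose u := [ffun s => M s t0 / r] : {ffun conf D1 -> K}.
pose w t := G t t0 / r.
have Wpos : 0 < W t0.
  rewrite /W (bigD1 t0) //=.
  apply: (lt_le_trans (_ : 0 < G t0 t0 * G t0 t0)); first by rewrite mulr_gt0.
  by rewrite lerDl sumr_ge0 // => t' _; apply: GG_ge0.
set N := W t0 / g.
have Npos : 0 < N by rewrite divr_gt0.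
have normw : \sum_t (w t)^* * w t = N.
  rewrite /N /W mulr_suml; apply: eq_bigr => t _.
  rewrite /w rmorphM fmorphV /= rc G_conj -rr; field; exact: rn0.
set R := sqrtC N.
have Rpos : 0 < R by rewrite sqrtC_gt0.
have Rn0 : R != 0 by rewrite gt_eqF.
have RR : R ^+ 2 = N by rewrite sqrtCK.
have Rc : R^* = R by rewrite geC0_conj // ltW.
pose v := [ffun t => (w t)^* / R] : {ffun conf D2 -> K}.
pose chi := tens Q u v.
have su : dotq u u = 1.
  rewrite /dotq; under eq_bigr do rewrite !ffunE.
  transitivity (g / r ^+ 2); last by rewrite rr divff // gt_eqF.
  rewrite /g /G mulr_suml; apply: eq_bigr => s _.
  rewrite rmorphM fmorphV /= rc; field; exact: rn0.
have sv : dotq v v = 1.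
  rewrite /dotq; under eq_bigr do rewrite !ffunE.
  transitivity (N / R ^+ 2); last by rewrite RR divff // gt_eqF.
  rewrite -{1}normw mulr_suml; apply: eq_bigr => t _.
  rewrite rmorphM fmorphV /= conjCK Rc; field; exact: Rn0.
have sc : is_state chi by rewrite /is_state (dot_tens hQ12 h12) su sv mulr1.
have dot : dotq a chi = R.
  rewrite /dotq /chi /tens.
  under eq_bigr do rewrite !ffunE aM.
  rewrite (sum_split hQ12 h12 (fun s t => (M s t)^* * (M s t0 / r * ((w t)^* / R)))).
  rewrite exchange_big /=.
  transitivity (\sum_t (G t t0 / r) * (w t)^* / R).
    apply: eq_bigr => t _; rewrite /G !mulr_suml; apply: eq_bigr => s _; ring.
  transitivity (N / R).
    rewrite -normw mulr_suml; apply: eq_bigr => t _; rewrite /w; ring.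
  by rewrite -RR; field.
have mp : mproduct chi.
  exists D1; split => //; exists u, v; split => //.
have := far chi sc mp; rewrite dot ger0_norm ?RR; last exact: ltW.
apply: le_trans; rewrite /N ler_pdivlMr //.
Qed.

End Main.

Lemma not_nt n (Q S : {set 'I_n}) :
  ~~ ((Q :&: S != set0) && (Q :&: S \proper Q)) ->
  (forall i, i \in Q -> i \notin S) \/ (forall i, i \in Q -> i \in S).
Proof.
rewrite negb_and negbK => /orP[/eqP h | hp].
  left => i hi; apply/negP => hs.
  have : i \in Q :&: S by rewrite inE hi hs.
  by rewrite h inE.
right => i hi.
move: hp; rewrite properE subsetIl /= negbK => /subsetP/(_ i hi).
by rewrite inE => /andP[].
Qed.

Lemma Tq_cases (K : numClosedFieldType) n (Q S : {set 'I_n}) (a : {ffun conf Q -> K}) eps :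
  eps \is Num.real -> is_state a -> eps_far a eps ->
  0 <= Tq S a <= 1 /\
  ((Q :&: S != set0) && (Q :&: S \proper Q) -> Tq S a <= 1 - eps ^+ 2).
Proof.
move=> er st far.
have e2 : 0 <= eps ^+ 2 by rewrite -real_normK // exprn_ge0.
have H : (Q :&: S != set0) && (Q :&: S \proper Q) -> Tq S a <= 1 - eps ^+ 2.
  by move=> /andP[h1 h2]; apply: Tq_far.
split => //.
case: (boolP ((Q :&: S != set0) && (Q :&: S \proper Q))) => h.
  rewrite Tq_ge0 /=; apply: le_trans (H h) _; by rewrite lerBlDr lerDl.
by case: (not_nt h) => h'; [rewrite Tq_triv0 // lexx ler01 | rewrite Tq_triv1 // lexx ler01].
Qed.

Theorem corollary2p18 (K : numClosedFieldType) (n : nat) (C : {set 'I_n})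
  (a : {ffun conf C -> K}) (b : {ffun conf (~: C) -> K}) (eps : K)
  (S : {set 'I_n}) :
  eps \is Num.real ->
  C != set0 -> C != [set: 'I_n] ->
  is_state a -> is_state b ->
  eps_far a eps -> eps_far b eps ->
  S != set0 -> S != [set: 'I_n] ->
  let psi : {ffun conf [set: 'I_n] -> K} := tens [set: 'I_n] a b in
  ((S == C) || (S == ~: C) -> swap_accept S psi = 1) /\
  (S != C -> S != ~: C -> swap_accept S psi <= 1 - eps ^+ 2 / 2).
Proof.
move=> er hC0 hCT sa sb fa fb hS0 hST psi.
have hQ : forall i, (i \in [set: 'I_n]) = (i \in C) || (i \in ~: C).
  by move=> i; rewrite !inE orbN.
have hDE : forall i, i \in C -> i \notin ~: C by move=> i; rewrite !inE => ->.
have dpsi : dotq psi psi = 1.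
  by rewrite /psi (dot_tens hQ hDE) sa sb mulr1.
have sw_eq : swap_accept S psi = 2^-1 * (1 + Tq S a * Tq S b).
  by rewrite swap_accept_Tq dpsi expr1n /psi (Tq_tens _ hQ hDE).
rewrite sw_eq; split.
  have two : 2^-1 * (1 + 1 * 1) = 1 :> K.
    by rewrite mulr1 mulVf // pnatr_eq0.
  case/orP => /eqP ->.
    rewrite (@Tq_triv1 _ _ C C a) //.
    rewrite (@Tq_triv0 _ _ (~: C) C b) //.
    by move=> i; rewrite inE.
  have h1 : forall i, i \in C -> i \notin ~: C by move=> i; rewrite inE => ->.
  by rewrite (@Tq_triv0 _ _ C (~: C) a) // (@Tq_triv1 _ _ (~: C) (~: C) b).
move=> nC nNC.
have [[/andP[a0 a1] ha] [/andP[b0 b1] hb]] :=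
  (conj (Tq_cases S er sa fa) (Tq_cases S er sb fb)).
have key : Tq S a * Tq S b <= 1 - eps ^+ 2.
  case: (boolP ((C :&: S != set0) && (C :&: S \proper C))) => h.
    by apply: le_trans (ha h); apply: ler_piMr.
  case: (boolP ((~: C :&: S != set0) && (~: C :&: S \proper ~: C))) => h'.
    by rewrite mulrC; apply: le_trans (hb h'); apply: ler_piMr.
  exfalso.
  case: (not_nt h) => h1; case: (not_nt h') => h2.
  - move/eqP: hS0; apply; apply/setP => i; rewrite inE.
    case hi: (i \in C); first exact/negbTE/h1.
    by apply/negbTE/h2; rewrite inE hi.
  - move/eqP: nNC; apply; apply/setP => i; rewrite inE.
    case hi: (i \in C); first exact/negbTE/h1.
    by apply: h2; rewrite inE hi.
  - move/eqP: nC; apply; apply/setP => i.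
    case hi: (i \in C); first exact: h1.
    by apply/negbTE/h2; rewrite inE hi.
  - move/eqP: hST; apply; apply/setP => i; rewrite inE.
    case hi: (i \in C); first exact: h1.
    by apply: h2; rewrite inE hi.
have -> : 1 - eps ^+ 2 / 2 = 2^-1 * (1 + (1 - eps ^+ 2)) :> K.
  by field.
by apply: ler_wpM2l; [rewrite invr_ge0 ler0n | rewrite lerD2l].
Qed.
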